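(* For a word $w\in\mathcal{A}^*$ let $\iota(w)$ denote the word obtained from $w$ by deleting every occurrence of every letter that occurs more than once in $w$ (so $\iota(w)$ is the subsequence of letters occurring exactly once, in their order in $w$); this depends only on the element of ${\mathsf{stal}}$ represented by $w$. (1) Two elements $s,t\in{\mathsf{stal}}$ lie in the same connected component of $K({\mathsf{stal}})$ if and only if $s\equiv_{\mathrm{ev}}t$ and $\iota(s)$ and $\iota(t)$ are cyclic rotations of each other as words (i.e. $\iota(s)=pq$ and $\iota(t)=qp$ for some words $p,q$). (2) The maximum diameter of a connected component of $K({\mathsf{stal}})$ is $3$. (3) The maximum diameter of a connected component of $K({\mathsf{stal}}_n)$ is $3$ if $n\ge3$, is $1$ if $n=2$, and is $0$ if $n=1$.
   Context: Let $\mathcal{A}=\{1<2<3<\cdots\}$ be the ordered alphabet of positive integers and $\mathcal{A}_n=\{1<2<\cdots<n\}$. For a monoid $M$ and $s,t\in M$, write $s\sim t$ if there exist $x,y\in M$ with $s=xy$ and $t=yx$ (a cyclic shift); $\sim^*$ is the reflexive–transitive closure of $\sim$. The cyclic shift graph $K(M)$ is the undirected graph with vertex set $M$ and an edge between $s$ and $t$ iff $s\sim t$; its connected components are the $\sim^*$-classes, and distances/diameters are graph distances in $K(M)$. The evaluation of a word $w$ is the tuple $(|w|_a)_{a}$ giving the number of occurrences of each letter $a$; all monoids considered are defined by presentations whose defining relations preserve evaluation, so the evaluation of an element is well defined, and $s\equiv_{\mathrm{ev}} t$ means $s$ and $t$ have the same evaluation. The stalactic monoid ${\mathsf{stal}}$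 is $\mathcal{A}^*$ modulo the congruence generated by the relations $bavb=abvb$ for all letters $a,b$ and words $v\in\mathcal{A}^*$; ${\mathsf{stal}}_n$ is defined by the same relations over $\mathcal{A}_n$. Equivalently, two words are equal in ${\mathsf{stal}}$ iff they have the same evaluation and the same order of rightmost occurrences of their letters. *)

(* Defs.v *)
From mathcomp Require Import all_boot.
From Stdlib Require Import Relations.
Set Implicit Arguments. Unset Strict Implicit. Unset Printing Implicit Defensive.

Definition alphA : pred nat := fun a => 0 < a.
Definition alphAn (n : nat) : pred nat := fun a => 0 < a <= n.

Definition word (P : pred nat) (w : seq nat) : bool := all P w.

Definition stal_step (P : pred nat) (u w : seq nat) : Prop :=
  word P u /\ word P w /\
  exists (x v y : seq nat) (a b : nat),
    u = x ++ [:: b; a] ++ v ++ [:: b] ++ y /\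
    w = x ++ [:: a; b] ++ v ++ [:: b] ++ y.

(* the congruence on P^* generated by the stalactic relations:
   equality in stal (P = alphA) or stal_n (P = alphAn n) *)
Definition stal_eq (P : pred nat) : relation (seq nat) :=
  clos_refl_sym_trans (seq nat) (stal_step P).

Definition cshift (P : pred nat) (u w : seq nat) : Prop :=
  exists x y : seq nat, word P x /\ word P y /\
    stal_eq P u (x ++ y) /\ stal_eq P w (y ++ x).

Fixpoint walk (P : pred nat) (k : nat) (u w : seq nat) : Prop :=
  match k with
  | 0 => stal_eq P u w
  | k'.+1 => exists z, word P z /\ walk P k' u z /\ cshift P z w
  end.

Definition dist_le (P : pred nat) (d : nat) (u w : seq nat) : Prop :=
  exists k, k <= d /\ walk P k u w.

Definition dist_eq (P : pred nat) (d : nat) (u w : seq nat) : Prop :=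
  walk P d u w /\ forall k, k < d -> ~ walk P k u w.

Definition connected (P : pred nat) (u w : seq nat) : Prop :=
  exists k, walk P k u w.

Definition max_diam (P : pred nat) (d : nat) : Prop :=
  (forall u w, word P u -> word P w -> connected P u w -> dist_le P d u w) /\
  (exists u w, word P u /\ word P w /\ dist_eq P d u w).

Definition iota_w (w : seq nat) : seq nat := [seq a <- w | count_mem a w == 1].

(* Main.v *)
Require Import Defs.
From mathcomp Require Import all_boot.
From Stdlib Require Import Relations.
From mathcomp Require Import zify.
Set Implicit Arguments. Unset Strict Implicit. Unset Printing Implicit Defensive.

Fixpoint ro (s : seq nat) : seq nat :=
  match s with [::] => [::] | a :: s' => if a \in s' then ro s' else a :: ro s' end.

Lemma mem_ro s : ro s =i s.
Proof.
elim: s => [//|a s IH] b /=.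
case: ifP => Ha; rewrite ?inE IH //.
by case: eqVneq => // ->.
Qed.

Lemma uniq_ro s : uniq (ro s).
Proof.
elim: s => [//|a s IH] /=; case: ifP => Ha //=.
by rewrite mem_ro Ha.
Qed.

Lemma ro_cat s t : ro (s ++ t) = [seq a <- ro s | a \notin t] ++ ro t.
Proof.
elim: s => [//|a s IH] /=.
rewrite mem_cat; case: (boolP (a \in s)) => Has /=; first by rewrite IH.
case: (boolP (a \in t)) => Hat /=; rewrite IH //.
Qed.

Lemma ro_uniq s : uniq s -> ro s = s.
Proof. elim: s => [//|a s IH] /= /andP [Ha Hu]; by rewrite (negbTE Ha) IH. Qed.

Definition blocks (o : seq nat) (f : nat -> nat) :=
  flatten [seq nseq (f a) a | a <- o].

Lemma blocks_cons a o f : blocks (a :: o) f = nseq (f a) a ++ blocks o f.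
Proof. by []. Qed.

Lemma blocks_cat o1 o2 f : blocks (o1 ++ o2) f = blocks o1 f ++ blocks o2 f.
Proof. by rewrite /blocks map_cat flatten_cat. Qed.

Lemma mem_blocks o f b : (b \in blocks o f) = (b \in o) && (0 < f b).
Proof.
elim: o => [//|a o IH]; rewrite blocks_cons mem_cat IH inE mem_nseq.
case: (b =P a) => [->|_] /=; last by rewrite andbF.
by case: (0 < f a); case: (a \in o).
Qed.

Lemma count_blocks o f b : uniq o ->
  count_mem b (blocks o f) = if b \in o then f b else 0.
Proof.
elim: o => [//|a o IH] /= /andP [Ha Hu].
rewrite blocks_cons count_cat count_nseq IH // !inE.
case: (b =P a) => [->|/eqP Hn] /=.
  by rewrite eqxx (negbTE Ha) addn0 mul1n.
by rewrite eq_sym (negbTE Hn) mul0n.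
Qed.

Lemma ro_nseq n a : 0 < n -> ro (nseq n a) = [:: a].
Proof.
case: n => [//|n] _; elim: n => [//|n IH].
have -> : nseq n.+2 a = a :: nseq n.+1 a by [].
by rewrite {1}/ro -/ro IH mem_nseq /= eqxx.
Qed.

Lemma ro_blocks o f : uniq o -> (forall a, a \in o -> 0 < f a) -> ro (blocks o f) = o.
Proof.
elim: o => [//|a o IH] /= /andP [Ha Hu] Hf.
rewrite blocks_cons ro_cat ro_nseq ?Hf ?inE ?eqxx // IH //; last first.
  by move=> b Hb; apply: Hf; rewrite inE Hb orbT.
by rewrite /= mem_blocks (negbTE Ha).
Qed.

Lemma eq_blocks o f g : {in o, f =1 g} -> blocks o f = blocks o g.
Proof.
elim: o => [//|a o IH] H; rewrite !blocks_cons H ?inE ?eqxx // IH //.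
by move=> b Hb; apply: H; rewrite inE Hb orbT.
Qed.

Lemma word_sub (P : pred nat) s t : word P s -> {subset t <= s} -> word P t.
Proof. move=> /allP Hs Ht; apply/allP => x /Ht; exact: Hs. Qed.

Lemma word_cat (P : pred nat) s t : word P (s ++ t) = word P s && word P t.
Proof. by rewrite /word all_cat. Qed.

Lemma stal_cons (P : pred nat) a u v : P a -> stal_eq P u v -> stal_eq P (a :: u) (a :: v).
Proof.
move=> Pa; elim.
- move=> x y [Wx [Wy [x0 [v0 [y0 [a0 [b0 [Ex Ey]]]]]]]].
  apply: rst_step; split; first by rewrite /word /= Pa.
  split; first by rewrite /word /= Pa.
  rewrite Ex Ey.
  by exists (a :: x0), v0, y0, a0, b0.
- move=> x; exact: rst_refl.
- move=> x y _ H; exact: rst_sym.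
- move=> x y z _ H1 _ H2; exact: rst_trans H1 H2.
Qed.

Lemma stal_mv (P : pred nat) a p q : P a -> word P p -> word P q ->
  stal_eq P (a :: p ++ a :: q) (p ++ a :: a :: q).
Proof.
move=> Pa; elim: p => [|b p IH] Wp Wq; first exact: rst_refl.
move: Wp; rewrite /word /= => /andP [Pb Wp].
apply: rst_trans (stal_cons Pb (IH Wp Wq)).
apply: rst_step; split.
  by rewrite /word /= Pa Pb /= all_cat Wp /= Pa.
split; first by rewrite /word /= Pa Pb /= all_cat Wp /= Pa.
by exists [::], p, q, b, a.
Qed.

Definition nf (s : seq nat) := blocks (ro s) (fun a => count_mem a s).

Lemma nf_eq (P : pred nat) s : word P s -> stal_eq P s (nf s).
Proof.
elim: s => [|a s IH]; first by move=> _; exact: rst_refl.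
rewrite /word /= => /andP [Pa Ws].
apply: rst_trans (stal_cons Pa (IH Ws)) _.
rewrite /nf /=; case: ifP => Has.
  have [o1 [o2 Ho]] : exists o1 o2, ro s = o1 ++ a :: o2.
    have : a \in ro s by rewrite mem_ro.
    by case/splitPr => o1 o2; exists o1, o2.
  have Hu := uniq_ro s; rewrite Ho cat_uniq /= in Hu.
  move: Hu => /and3P [_ Ha1 /andP [Ha2 _]]; case/norP: Ha1 => Ha1 _.
  rewrite Ho !blocks_cat !blocks_cons.
  have Hc : 0 < count_mem a s by rewrite -has_count has_pred1.
  rewrite /= eqxx add1n.
  case Hcs : (count_mem a s) Hc => [//|c] _ /=.
  rewrite (@eq_blocks o1 (fun a0 => (a == a0) + count_mem a0 s) (fun a0 => count_mem a0 s)); last first.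
    by move=> b Hb; case: eqP => // E; rewrite E Hb in Ha1.
  rewrite (@eq_blocks o2 (fun a0 => (a == a0) + count_mem a0 s) (fun a0 => count_mem a0 s)); last first.
    by move=> b Hb; case: eqP => // E; rewrite E Hb in Ha2.
  apply: rst_sym.
  have W : word P (blocks o1 (fun a0 => count_mem a0 s)) /\ word P (nseq c a ++ blocks o2 (fun a0 => count_mem a0 s)).
    have Hx : {subset o1 ++ a :: o2 <= s} by move=> x; rewrite -Ho mem_ro.
    split; apply: (word_sub Ws) => x.
      rewrite mem_blocks => /andP [Hx1 _]; apply: Hx; by rewrite mem_cat Hx1.
    rewrite mem_cat mem_nseq mem_blocks => /orP [/andP [_ /eqP ->]|/andP [Hx1 _]] //.
    apply: Hx; by rewrite mem_cat inE Hx1 !orbT.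
  case: W => W1 W2.
  by apply: rst_sym; rewrite -cat_cons; apply: stal_mv.
rewrite blocks_cons /= eqxx.
have -> : count_mem a s = 0 by apply/eqP; rewrite -leqn0 leqNgt -has_count has_pred1 Has.
rewrite (@eq_blocks _ (fun a0 => (a == a0) + count_mem a0 s) (fun a0 => count_mem a0 s)); first exact: rst_refl.
by move=> b Hb; case: eqP => // E; rewrite -E mem_ro Has in Hb.
Qed.

Lemma ro_cons a s : ro (a :: s) = if a \in s then ro s else a :: ro s.
Proof. by []. Qed.

Lemma ro_cat_eq x s t : s =i t -> ro s = ro t -> ro (x ++ s) = ro (x ++ t).
Proof.
move=> Hm Hr; rewrite !ro_cat Hr; congr (_ ++ _).
by apply: eq_filter => a; rewrite Hm.
Qed.

Lemma step_inv (P : pred nat) u w : stal_step P u w -> perm_eq u w /\ ro u = ro w.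
Proof.
move=> [_ [_ [x [v [y [a [b [-> ->]]]]]]]].
set r := v ++ [:: b] ++ y.
have Hb : b \in r by rewrite mem_cat mem_cat inE eqxx orbT.
split.
  rewrite perm_cat2l /=; apply/permP => p /=; by rewrite addnCA.
apply: ro_cat_eq.
  by move=> c; rewrite !inE orbCA.
change (ro (b :: a :: r) = ro (a :: b :: r)).
rewrite !ro_cons !inE Hb orbT.
case: (a =P b) => [->|_] /=; by rewrite ?Hb.
Qed.

Lemma stal_inv (P : pred nat) u w : stal_eq P u w -> perm_eq u w /\ ro u = ro w.
Proof.
elim.
- move=> x y; exact: step_inv.
- by move=> x.
- by move=> x y _ [H1 H2]; rewrite perm_sym H1 H2.
- move=> x y z _ [H1 H2] _ [H3 H4]; split; last by rewrite H2 H4.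
  exact: perm_trans H1 H3.
Qed.

Lemma nf_perm u w : perm_eq u w -> ro u = ro w -> nf u = nf w.
Proof.
move=> /permP Hp Hr; rewrite /nf Hr; apply: eq_blocks => a _; exact: Hp.
Qed.

Lemma stal_of (P : pred nat) u w : word P u -> word P w -> perm_eq u w -> ro u = ro w ->
  stal_eq P u w.
Proof.
move=> Wu Ww Hp Hr.
apply: rst_trans (nf_eq Wu) _; rewrite (nf_perm Hp Hr).
apply: rst_sym; exact: nf_eq.
Qed.

Lemma count_filter_mem (p : pred nat) b s :
  count_mem b [seq a <- s | p a] = if p b then count_mem b s else 0.
Proof.
elim: s => [|a s IH] /=; first by case: (p b).
case: (boolP (p a)) => Hpa /=; rewrite IH; case: (b =P a) => [->|/eqP Hn].
- by rewrite Hpa eqxx.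
- by rewrite eq_sym (negbTE Hn).
- by rewrite (negbTE Hpa).
- by rewrite eq_sym (negbTE Hn); case: (p b).
Qed.

Lemma filter_ro (p : pred nat) s : (forall a, p a -> count_mem a s <= 1) ->
  [seq a <- s | p a] = [seq a <- ro s | p a].
Proof.
elim: s => [//|a s IH] H /=.
have H' : forall b, p b -> count_mem b s <= 1.
  move=> b /H /=; apply: leq_trans; exact: leq_addl.
case: (boolP (p a)) => Hpa.
  have Has : a \notin s.
    have := H a Hpa; rewrite /= eqxx add1n ltnS leqn0 => /eqP Hc.
    by rewrite -has_pred1 has_count Hc.
  by rewrite (negbTE Has) /= Hpa IH.
by case: ifP => _ /=; rewrite ?(negbTE Hpa) IH.
Qed.

Lemma iota_ro s : iota_w s = [seq a <- ro s | count_mem a s == 1].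
Proof. rewrite /iota_w; apply: filter_ro => a /eqP ->; exact: leqnn. Qed.

Lemma uniq_iota s : uniq (iota_w s).
Proof. rewrite iota_ro; apply: filter_uniq; exact: uniq_ro. Qed.

Lemma iota_inv u w : perm_eq u w -> ro u = ro w -> iota_w u = iota_w w.
Proof.
move=> /permP Hp Hr; rewrite !iota_ro Hr; apply: eq_filter => a; by rewrite Hp.
Qed.

Definition Rot (s t : seq nat) := exists p q, s = p ++ q /\ t = q ++ p.

Lemma RotE s t : Rot s t <-> exists2 k, k <= size s & t = rot k s.
Proof.
split.
  move=> [p [q [-> ->]]]; exists (size p); first by rewrite size_cat leq_addr.
  by rewrite rot_size_cat.
move=> [k Hk ->]; exists (take k s), (drop k s); split; first by rewrite cat_take_drop.
by [].
Qed.

Lemma Rot_refl s : Rot s s.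
Proof. by exists s, [::]; rewrite cats0. Qed.

Lemma Rot_trans s t r : Rot s t -> Rot t r -> Rot s r.
Proof.
move=> /RotE [k Hk ->] /RotE [m]; rewrite size_rot => Hm ->.
apply/RotE; rewrite rot_add_mod //.
case: ifP => H; first by exists (m + k).
exists (m + k - size s) => //; rewrite leq_subLR; apply: leq_add => //.
Qed.

Lemma walk_inv (P : pred nat) k u w : walk P k u w -> perm_eq u w /\ Rot (iota_w u) (iota_w w).
Proof.
elim: k w => [|k IH] w /=.
  move=> /stal_inv [Hp Hr]; split => //; rewrite (iota_inv Hp Hr); exact: Rot_refl.
move=> [z [_ [/IH [Hp1 Hr1] [x [y [_ [_ [/stal_inv [Hp2 Hr2] /stal_inv [Hp3 Hr3]]]]]]]]].
split.
  apply: perm_trans Hp1 _; apply: perm_trans Hp2 _; rewrite perm_sym.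
  by apply: perm_trans Hp3 _; rewrite perm_catC.
apply: Rot_trans Hr1 _.
rewrite (iota_inv Hp2 Hr2) (iota_inv Hp3 Hr3).
have Hc : forall a, count_mem a (x ++ y) = count_mem a (y ++ x).
  by move=> a; rewrite !count_cat addnC.
rewrite /iota_w (@eq_filter _ (fun a => count_mem a (y ++ x) == 1) (fun a => count_mem a (x ++ y) == 1)); last by move=> a; rewrite Hc.
rewrite !filter_cat; by eexists; eexists.
Qed.

Lemma cshift_sym (P : pred nat) u w : cshift P u w -> cshift P w u.
Proof. move=> [x [y [Wx [Wy [H1 H2]]]]]; by exists y, x. Qed.

Lemma permE (s t : seq nat) : (forall b, count_mem b s = count_mem b t) -> perm_eq s t.
Proof. move=> H; rewrite /perm_eq; apply/allP => x _ /=; by rewrite H. Qed.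

Lemma cnt_pos (a : nat) (s : seq nat) : (0 < count_mem a s) = (a \in s).
Proof. by rewrite -has_count has_pred1. Qed.

Lemma move1 (P : pred nat) u rho : word P u -> uniq rho ->
  (forall a, (a \in rho) = (a \in u) && (1 < count_mem a u)) ->
  let z := blocks (ro u) (fun a => count_mem a u - (1 < count_mem a u)) ++ rho in
  [/\ word P z, cshift P u z, ro z = iota_w u ++ rho & forall b, count_mem b z = count_mem b u].
Proof.
move=> Wu Ur Hr z.
set d := (fun a => count_mem a u - (1 < count_mem a u)).
set y := blocks (ro u) d.
have Hd : forall a, a \in u -> 0 < d a.
  move=> a; rewrite -cnt_pos /d; case: (count_mem a u) => [|[|c]] //.
have Hry : {subset rho <= y}.
  move=> a; rewrite Hr /y mem_blocks mem_ro => /andP [Ha _]; by rewrite Ha Hd.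
have Hcnt : forall b, count_mem b (rho ++ y) = count_mem b u.
  move=> b; rewrite count_cat count_uniq_mem // count_blocks ?uniq_ro // Hr mem_ro /d.
  case: (boolP (b \in u)) => Hb /=; last by apply/esym/eqP; rewrite -leqn0 leqNgt cnt_pos.
  move: Hb; rewrite -cnt_pos; case: (count_mem b u) => [|[|c]] //= _.
have Wy : word P y.
  apply: (word_sub Wu) => a; rewrite /y mem_blocks mem_ro; by case/andP.
have Wr : word P rho.
  by apply: (word_sub Wu) => a; rewrite Hr; case/andP.
have Hroy : ro y = ro u.
  apply: ro_blocks; first exact: uniq_ro.
  by move=> a; rewrite mem_ro; apply: Hd.
split.
- by rewrite /z word_cat Wy Wr.
- exists rho, y; split => //; split => //; split; last exact: rst_refl.
  apply: stal_of => //; first by rewrite word_cat Wr Wy.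
    by apply: permE => b; rewrite Hcnt.
  rewrite ro_cat Hroy.
  have -> : [seq a <- ro rho | a \notin y] = [::].
    apply/eqP; rewrite -[_ == _]negbK -has_filter; apply/hasPn => a.
    rewrite mem_ro => /Hry ->; by [].
  by [].
- rewrite /z ro_cat Hroy (ro_uniq Ur) iota_ro; congr (_ ++ _).
  apply: eq_in_filter => a; rewrite mem_ro Hr => Ha; rewrite Ha /=.
  move: Ha; rewrite -cnt_pos; by case: (count_mem a u) => [|[|c]].
- by move=> b; rewrite -Hcnt /z !count_cat addnC.
Qed.

Lemma filter_keep (s t : seq nat) : (forall a, a \in s -> a \notin t) ->
  [seq a <- s | a \notin t] = s.
Proof. move=> H; apply/all_filterP/allP => a; exact: H. Qed.

Lemma filter_none (s t : seq nat) : {subset s <= t} -> [seq a <- s | a \notin t] = [::].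
Proof.
move=> H; apply/eqP; rewrite -[_ == _]negbK -has_filter; apply/hasPn => a /H ->; by [].
Qed.

Lemma middle (P : pred nat) z1 z2 al be rho :
  word P z1 -> word P z2 ->
  ro z1 = al ++ be ++ rho -> ro z2 = be ++ al ++ rho ->
  (forall b, count_mem b z1 = count_mem b z2) ->
  (forall b, b \in al ++ be -> count_mem b z1 = 1) ->
  (forall b, b \in rho -> 1 < count_mem b z1) ->
  cshift P z1 z2.
Proof.
move=> W1 W2 R1 R2 Hc Hs Hr.
move: (uniq_ro z1); rewrite R1 !cat_uniq => /and3P [Ual Hal /and3P [Ube Hbe Urho]].
have Hal' : forall a, a \in al -> (a \notin be) && (a \notin rho).
  move=> a Ha; rewrite -negb_or -mem_cat; apply/negP => H.
  by move/hasPn: Hal => /(_ a H); rewrite Ha.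
have Hbe' : forall a, a \in be -> a \notin rho.
  move=> a Ha; apply/negP => H.
  by move/hasPn: Hbe => /(_ a H); rewrite Ha.
have Hz1 : forall b, (b \in z1) = [|| b \in al, b \in be | b \in rho].
  by move=> b; rewrite -mem_ro R1 !mem_cat.
set c := fun a => count_mem a z1.
set K := blocks rho (fun a => (c a).-1).
have HK : forall b, (b \in K) = (b \in rho).
  move=> b; rewrite mem_blocks; case: (boolP (b \in rho)) => Hb //=.
  by have := Hr b Hb; rewrite /c; case: (count_mem b z1) => [|[|n]].
have Hx : forall b, count_mem b (al ++ rho ++ be ++ K) = count_mem b z1.
  move=> b; rewrite /K !count_cat (count_uniq_mem _ Ual) (count_uniq_mem _ Urho) (count_uniq_mem _ Ube) count_blocks // /c.
  case: (boolP (b \in al)) => Ha.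
    move: (Hal' b Ha) => /andP [/negbTE -> /negbTE ->]; rewrite Hs ?mem_cat ?Ha //.
  case: (boolP (b \in be)) => Hb.
    rewrite (negbTE (Hbe' b Hb)) Hs ?mem_cat ?Hb ?orbT //.
  case: (boolP (b \in rho)) => Hrb /=.
    by have := Hr b Hrb; case: (count_mem b z1) => [|[|n]].
  apply/esym/eqP; rewrite -leqn0 leqNgt cnt_pos Hz1; by rewrite (negbTE Ha) (negbTE Hb) (negbTE Hrb).
have Wx : word P (al ++ rho).
  by apply: (word_sub W1) => a; rewrite Hz1 mem_cat => /orP [->|->]; rewrite ?orbT.
have Wy : word P (be ++ K).
  by apply: (word_sub W1) => a; rewrite Hz1 mem_cat HK => /orP [->|->]; rewrite ?orbT.
have URho : ro rho = rho by apply: ro_uniq.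
have RK : ro K = rho.
  apply: ro_blocks => // a Ha; have := Hr a Ha; rewrite /c; by case: (count_mem a z1) => [|[|n]].
exists (al ++ rho), (be ++ K); split => //; split => //; split.
- apply: stal_of => //; first by rewrite word_cat Wx Wy.
    by apply: permE => b; rewrite -catA Hx.
  rewrite R1 -catA ro_cat (ro_uniq Ual) filter_keep; last first.
    move=> a Ha; move: (Hal' a Ha) => /andP [H1 H2].
    by rewrite !mem_cat HK (negbTE H1) (negbTE H2).
  congr (_ ++ _); rewrite ro_cat URho filter_none; last first.
    by move=> a Ha; rewrite mem_cat HK Ha orbT.
  rewrite /= ro_cat (ro_uniq Ube) filter_keep ?RK //.
  by move=> a Ha; rewrite HK Hbe'.
- apply: stal_of => //; first by rewrite word_cat Wy Wx.
    apply: permE => b; rewrite -Hc -Hx !count_cat; lia.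
  rewrite R2 -catA ro_cat (ro_uniq Ube) filter_keep; last first.
    move=> a Ha.
    have Hna : a \notin al by apply/negP => H; move: (Hal' a H) => /andP [/negP]; rewrite Ha.
    by rewrite !mem_cat HK (negbTE Hna) (negbTE (Hbe' a Ha)).
  congr (_ ++ _); rewrite ro_cat RK filter_none; last first.
    by move=> a Ha; rewrite mem_cat Ha orbT.
  rewrite /= ro_cat (ro_uniq Ual) filter_keep ?URho //.
  by move=> a Ha; move: (Hal' a Ha) => /andP [].
Qed.

Lemma three (P : pred nat) u w al be : word P u -> word P w -> perm_eq u w ->
  iota_w u = al ++ be -> iota_w w = be ++ al -> walk P 3 u w.
Proof.
move=> Wu Ww Hp Iu Iw.
have Hcu : forall b, count_mem b u = count_mem b w by move/permP: Hp.
set rho := [seq a <- ro u | 1 < count_mem a u].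
have Ur : uniq rho by apply: filter_uniq; exact: uniq_ro.
have Hru : forall a, (a \in rho) = (a \in u) && (1 < count_mem a u).
  by move=> a; rewrite mem_filter mem_ro andbC.
have Hrw : forall a, (a \in rho) = (a \in w) && (1 < count_mem a w).
  by move=> a; rewrite Hru (perm_mem Hp) Hcu.
have [W1 C1 R1 N1] := move1 Wu Ur Hru.
have [W2 C2 R2 N2] := move1 Ww Ur Hrw.
set z1 := blocks _ _ ++ rho in W1 C1 R1 N1.
set z2 := blocks _ _ ++ rho in W2 C2 R2 N2.
have M : cshift P z1 z2.
  apply: (@middle P z1 z2 al be rho) => //.
  - by rewrite R1 Iu catA.
  - by rewrite R2 Iw catA.
  - by move=> b; rewrite N1 N2 Hcu.
  - move=> b; rewrite -Iu N1 /iota_w mem_filter; by case/andP=> /eqP.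
  - by move=> b; rewrite N1 Hru => /andP [].
exists z2; split => //; split; last exact: cshift_sym.
exists z1; split => //; split => //.
exists u; split => //; split => //; exact: rst_refl.
Qed.

Definition nbs (L o : seq nat) :=
  [seq ro (rot k s) | s <- [seq s <- permutations L | ro s == o], k <- iota 0 (size L).+1].

Lemma nbs_spec (P : pred nat) z w L : cshift P z w -> perm_eq z L -> ro w \in nbs L (ro z).
Proof.
move=> [x [y [_ [_ [/stal_inv [Hp1 Hr1] /stal_inv [Hp2 Hr2]]]]]] HL.
rewrite Hr2 Hr1 -(rot_size_cat x y) /nbs.
apply: allpairs_f.
  rewrite mem_filter eqxx /= mem_permutations.
  by apply: perm_trans HL; rewrite perm_sym.
rewrite mem_iota /= add0n ltnS -(perm_size HL) (perm_size Hp1) size_cat leq_addr.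
by [].
Qed.

Definition u0 := [:: 3; 3; 2; 1].
Definition w0 := [:: 3; 3; 1; 2].

Lemma far (P : pred nat) k : k < 3 -> ~ walk P k u0 w0.
Proof.
case: k => [|[|[|k]]] // _.
- by move=> /stal_inv [_ H].
- move=> [z [_ [/stal_inv [Hp Hr] C]]].
  have Hz : perm_eq z u0 by rewrite perm_sym.
  have := nbs_spec C Hz.
  by rewrite -Hr; vm_compute.
- move=> [z [_ [[z' [_ [/stal_inv [Hp Hr] C1]]] C2]]].
  have Hz' : perm_eq z' u0 by rewrite perm_sym.
  have H1 := nbs_spec C1 Hz'.
  have Hz : perm_eq z u0.
    move: C1 => [x [y [_ [_ [/stal_inv [Hp1 _] /stal_inv [Hp2 _]]]]]].
    by rewrite (permPl Hp2) perm_catC -(permPl Hp1).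
  have H2 := nbs_spec (cshift_sym C2) (isT : perm_eq w0 u0).
  rewrite -Hr in H1.
  have : ro z \in [seq t <- nbs u0 (ro u0) | t \in nbs u0 (ro w0)] by rewrite mem_filter H2.
  by vm_compute.
Qed.

Lemma max3 (P : pred nat) : word P u0 -> word P w0 -> max_diam P 3.
Proof.
move=> W1 W2; split.
  move=> u w Wu Ww [k /walk_inv [Hp [p [q [Hu Hw]]]]].
  exists 3; split => //; exact: three Wu Ww Hp Hu Hw.
exists u0, w0; split => //; split => //; split.
  apply: (@three P u0 w0 [:: 2] [:: 1]) => //.
exact: far.
Qed.

Lemma rot_cshift (P : pred nat) u w o1 o2 : word P u -> word P w -> perm_eq u w ->
  ro u = o1 ++ o2 -> ro w = o2 ++ o1 -> cshift P u w.
Proof.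
move=> Wu Ww Hp Ru Rw.
have Hc : forall b, count_mem b u = count_mem b w by move/permP: Hp.
set c := fun a => count_mem a u.
have Hsub : {subset o1 ++ o2 <= u} by move=> a; rewrite -Ru mem_ro.
exists (blocks o1 c), (blocks o2 c); split.
  apply: (word_sub Wu) => a; rewrite mem_blocks => /andP [Ha _]; apply: Hsub; by rewrite mem_cat Ha.
split.
  apply: (word_sub Wu) => a; rewrite mem_blocks => /andP [Ha _]; apply: Hsub; by rewrite mem_cat Ha orbT.
split.
  by rewrite -blocks_cat -Ru; apply: nf_eq.
rewrite -blocks_cat -Rw.
have -> : blocks (ro w) c = nf w by rewrite /nf; apply: eq_blocks => a _; rewrite /c Hc.
exact: nf_eq.
Qed.

Lemma two_cases (s t : seq nat) : uniq s -> uniq t -> s =i t -> size s <= 2 ->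
  s = t \/ exists o1 o2, s = o1 ++ o2 /\ t = o2 ++ o1.
Proof.
move=> Us Ut Hm Hs.
have Hz : size t = size s by apply/esym/perm_size/uniq_perm.
case: s Us Hm Hs Hz => [|a [|b [|? ?]]] // Us Hm _.
- by case: t Ut Hm => [|? ?] _ _ // _; left.
- case: t Ut Hm => [|c [|? ?]] // _ Hm _; left.
  by have := Hm a; rewrite !inE eqxx => /esym/eqP ->.
- case: t Ut Hm => [|c [|d [|? ?]]] // Ut Hm _.
  have Hc : (c == a) || (c == b).
    by have := Hm c; rewrite !inE eqxx /= => ->.
  have Hd : (d == a) || (d == b).
    by have := Hm d; rewrite !inE eqxx orbT => ->.
  move: Us Ut; rewrite /= !inE !andbT => Hab Hcd.
  case/orP: Hc => /eqP Ec; case/orP: Hd => /eqP Ed; subst.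
  + by rewrite eqxx in Hcd.
  + by left.
  + by right; exists [:: a], [:: b].
  + by rewrite eqxx in Hcd.
Qed.

Lemma max2 : max_diam (alphAn 2) 1.
Proof.
split.
  move=> u w Wu Ww [k /walk_inv [Hp _]].
  have Hs : size (ro u) <= 2.
    have -> : 2 = size [:: 1; 2] by [].
    apply: uniq_leq_size; first exact: uniq_ro.
    move=> a; rewrite mem_ro => Ha; move/allP: Wu => /(_ a Ha); rewrite /alphAn /= !inE.
    by case: a {Ha} => [|[|[|]]].
  have Hm : ro u =i ro w by move=> a; rewrite !mem_ro (perm_mem Hp).
  case: (two_cases (uniq_ro u) (uniq_ro w) Hm Hs) => [Hr|[o1 [o2 [R1 R2]]]].
    by exists 0; split => //=; apply: stal_of.
  exists 1; split => //; exists u; split => //; split; first exact: rst_refl.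
  exact: rot_cshift Wu Ww Hp R1 R2.
exists [:: 1; 2], [:: 2; 1]; split => //; split => //; split.
  exists [:: 1; 2]; split => //; split; first exact: rst_refl.
  by exists [:: 1], [:: 2]; split => //; split => //; split; exact: rst_refl.
case=> // _ /stal_inv [_ H]; by [].
Qed.

Lemma max1 : max_diam (alphAn 1) 0.
Proof.
have Hn : forall u, word (alphAn 1) u -> u = nseq (size u) 1.
  move=> u Wu; apply/all_pred1P; apply: sub_all Wu => a; rewrite /alphAn /=.
  by case: a => [|[|]].
split.
  move=> u w Wu Ww [k /walk_inv [Hp _]].
  exists 0; split => //=.
  rewrite (Hn u Wu) (Hn w Ww) (perm_size Hp); exact: rst_refl.
exists [::], [::]; split => //; split => //; split => //=; exact: rst_refl.
Qed.

Theorem mainTheorem6 :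
  (forall u w : seq nat, word alphA u -> word alphA w ->
     (connected alphA u w <->
      (perm_eq u w /\ exists p q : seq nat, iota_w u = p ++ q /\ iota_w w = q ++ p)))
  /\ max_diam alphA 3
  /\ (forall n : nat,
        (3 <= n -> max_diam (alphAn n) 3) /\
        (n = 2 -> max_diam (alphAn n) 1) /\
        (n = 1 -> max_diam (alphAn n) 0)).
Proof.
split.
  move=> u w Wu Ww; split.
    by move=> [k /walk_inv].
  move=> [Hp [p [q [Hu Hw]]]]; exists 3; exact: three Wu Ww Hp Hu Hw.
split; first by apply: max3.
move=> n; split; last split.
- move=> Hn; have H2 : 2 <= n by lia.
  have H1 : 1 <= n by lia.
  by apply: max3; rewrite /word /alphAn /= ?Hn ?H2 ?H1.
- by move=> ->; exact: max2.
- by move=> ->; exact: max1.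
Qed.
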